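(* $A_4(1,0,0,0,0)$ has a unique rational solution of Type A, namely $(f_0,f_1,f_2,f_3,f_4)=(t,0,0,0,0)$.
   Context: The $A_4^{(1)}$ Painlevé equation $A_4(\alpha_0,\dots,\alpha_4)$ is the system for five functions $f_0,\dots,f_4$ of $t$ (indices in $\mathbb{Z}/5\mathbb{Z}$, ${}'=d/dt$): $f_j'=f_j(f_{j+1}-f_{j+2}+f_{j+3}-f_{j+4})+\alpha_j$ ($j=0,\dots,4$), $f_0+\dots+f_4=t$. A rational solution is a tuple of rational functions satisfying it. A rational solution is of Type A if either (A(1)) for some $i$, $f_i$ has a pole at $t=\infty$ and the other $f_j$ are regular there, or (A(2)) for some $i$, $f_i,f_{i+1},f_{i+3}$ have a pole at $t=\infty$ and $f_{i+2},f_{i+4}$ are regular there. *)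

(* Defs.v *)
From HB Require Import structures.
From mathcomp Require Import all_boot all_order all_algebra.
Set Implicit Arguments. Unset Strict Implicit. Unset Printing Implicit Defensive.
Import Order.TTheory GRing.Theory Num.Theory.
Local Open Scope ring_scope.

Notation ratfun F := {fraction {poly F}}.
Notation "x %:F" := (@FracField.tofrac _ x).

Section RatFun.
Variable F : fieldType.

Definition rnum (r : ratfun F) : {poly F} := \n_(repr r).
Definition rden (r : ratfun F) : {poly F} := \d_(repr r).

Definition tvar : ratfun F := ('X)%:F.

Definition rderiv (r : ratfun F) : ratfun F :=
  ((rnum r)^`() * rden r - rnum r * (rden r)^`())%:F / ((rden r) ^+ 2)%:F.

Definition regular_at_infty (r : ratfun F) : bool :=
  (size (rnum r) <= size (rden r))%N.
Definition pole_at_infty (r : ratfun F) : bool := ~~ regular_at_infty r.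

(* The A_4^(1) Painleve system, indices in Z/5Z ('I_5 with its cyclic ring). *)
Definition A4_solution (alpha : 'I_5 -> F) (f : 'I_5 -> ratfun F) : Prop :=
  (forall j : 'I_5,
     rderiv (f j) = f j * (f (j + 1) - f (j + 2) + f (j + 3) - f (j + 4))
                    + (alpha j)%:P%:F)
  /\ \sum_(j < 5) f j = tvar.

Definition typeA (f : 'I_5 -> ratfun F) : Prop :=
  exists i : 'I_5,
    (pole_at_infty (f i) /\ forall j, j != i -> regular_at_infty (f j))
    \/ [/\ pole_at_infty (f i), pole_at_infty (f (i + 1)),
           pole_at_infty (f (i + 3)), regular_at_infty (f (i + 2))
         & regular_at_infty (f (i + 4))].

Definition alpha10000 (j : 'I_5) : F := if j == 0 then 1 else 0.
End RatFun.

(* Main.v *)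
Require Import Defs.
From HB Require Import structures.
From mathcomp Require Import all_boot all_order all_algebra.
From mathcomp Require Import ring zify.
Import Order.TTheory GRing.Theory Num.Theory.
Local Open Scope ring_scope.

Section PolyPart.
Variable F : numClosedFieldType.
Implicit Types P Q U H W A B G : {poly F}.

Definition Dq Q U := U^`() * Q - U * Q^`().

Lemma DqD Q U V : Dq Q (U + V) = Dq Q U + Dq Q V.
Proof. rewrite /Dq derivD; ring. Qed.
Lemma DqN Q U : Dq Q (- U) = - Dq Q U.
Proof. rewrite /Dq derivN; ring. Qed.
Lemma DqB Q U V : Dq Q (U - V) = Dq Q U - Dq Q V.
Proof. by rewrite DqD DqN. Qed.
Lemma Dq0 Q : Dq Q 0 = 0.
Proof. by rewrite /Dq deriv0 !mul0r subr0. Qed.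
Lemma DqXQ Q : Dq Q ('X * Q) = Q ^+ 2.
Proof. rewrite /Dq derivM derivX; ring. Qed.

Lemma size_Dq Q U : Q != 0 -> U != 0 ->
  (size (Dq Q U) + 2 <= size U + size Q)%N.
Proof.
move=> hQ hU.
have h1 := lt_size_deriv hU; have h2 := lt_size_deriv hQ.
have h3 := size_polyMleq U^`() Q; have h4 := size_polyMleq U Q^`().
have hs1 : (0 < size U)%N by rewrite size_poly_gt0.
have hs2 : (0 < size Q)%N by rewrite size_poly_gt0.
rewrite /Dq.
suff : (size (U^`() * Q - U * Q^`())%R <= (size U + size Q) - 2)%N by lia.
apply: leq_trans (size_polyD _ _) _; rewrite size_polyN geq_max.
apply/andP; split; [apply: leq_trans h3 _|apply: leq_trans h4 _]; lia.
Qed.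

Lemma lemL Q U H : Q != 0 -> (size Q < size H)%N -> Dq Q U = H * U -> U = 0.
Proof.
move=> hQ hH E; apply/eqP; apply/negPn/negP => hU.
have hH0 : H != 0 by rewrite -size_poly_gt0; lia.
have := size_Dq Q U hQ hU; rewrite E size_mul //; move: hH; set a := size H; set b := size Q; set c := size U; lia.
Qed.

Lemma lemG Q P G (c : F) : Q != 0 -> (size Q < size P)%N ->
  Dq Q P = P * G + c%:P * Q ^+ 2 -> (size G <= size Q)%N.
Proof.
move=> hQ hP E; rewrite leqNgt; apply/negP => hG.
have hP0 : P != 0 by rewrite -size_poly_gt0; lia.
have hG0 : G != 0 by rewrite -size_poly_gt0; lia.
have h1 := size_Dq Q P hQ hP0.
have h2 : size (P * G) = (size P + size G).-1 by rewrite size_mul.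
have h3 := size_polyMleq c%:P (Q ^+ 2).
have h4 : size (Q ^+ 2) = (size Q + size Q).-1 by rewrite expr2 size_mul.
have h5 := size_polyC_leq1 c.
have h6 : size (P * G + c%:P * Q ^+ 2) = size (P * G).
  by apply: size_polyDl; lia.
move: h1; rewrite E h6 h2; lia.
Qed.

Lemma pole_split Q G A B : G = A + B -> (size Q < size A)%N ->
  (size B <= size Q)%N -> (size Q < size G)%N.
Proof. by move=> -> hA hB; rewrite size_polyDl //; lia. Qed.

Lemma regD Q A B : (size A <= size Q)%N -> (size B <= size Q)%N ->
  (size (A + B)%R <= size Q)%N.
Proof. move=> hA hB; apply: leq_trans (size_polyD A B) _; rewrite geq_max hA hB. done. Qed.
Lemma regN Q A : (size A <= size Q)%N -> (size (- A)%R <= size Q)%N.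
Proof. by rewrite size_polyN. Qed.
Lemma regB Q A B : (size A <= size Q)%N -> (size B <= size Q)%N ->
  (size (A - B)%R <= size Q)%N.
Proof. by move=> hA hB; apply: regD => //; apply: regN. Qed.
Lemma reg0 Q : (size (0 : {poly F})%R <= size Q)%N.
Proof. by rewrite size_poly0. Qed.


Lemma lemRcop Q P (s : F) : s * s = 1 -> Q != 0 -> coprimep Q P ->
  (size P <= size Q)%N -> Dq Q P = s%:P * P * ('X * Q - P) + Q ^+ 2 -> False.
Proof.
move=> hs hQ cop hPQ E.
have s0 : s != 0 by apply/eqP => s0; move: hs; rewrite s0 mul0r => /eqP; rewrite eq_sym oner_eq0.
have hP : P != 0.
  apply/eqP => P0; move: E; rewrite P0 Dq0 mulr0 mul0r add0r => /eqP.
  by rewrite eq_sym expf_eq0 /= (negPf hQ).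
have hsP : (0 < size P)%N by rewrite size_poly_gt0.
have hsQ : (0 < size Q)%N by rewrite size_poly_gt0.
move: hPQ; rewrite leq_eqVlt => /orP [/eqP eqPQ | ltPQ].
-
  have h1 := size_Dq Q P hQ hP.
  have eR : s%:P * P * ('X * Q - P) + Q ^+ 2
      = s *: ((P * Q) * 'X) + (Q ^+ 2 - s%:P * P ^+ 2).
    by rewrite -mul_polyC; ring.
  have hPQ0 : P * Q != 0 by rewrite mulf_neq0.
  have h2 : size (s *: ((P * Q) * 'X)) = (size P + size Q) by
    rewrite size_scale // size_mulX // size_mul // prednK // addn_gt0 hsP.
  have h3 : (size (Q ^+ 2 - s%:P * P ^+ 2)%R < size P + size Q)%N.
    apply: leq_ltn_trans (size_polyD _ _) _; rewrite size_polyN gtn_max.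
    have h4 := size_polyMleq s%:P (P ^+ 2).
    have h5 := size_polyC_leq1 s.
    apply/andP; split.
      rewrite expr2 size_mul //. move: eqPQ hsQ; set a := size P; set b := size Q; lia.
    apply: leq_ltn_trans h4 _; rewrite expr2 size_mul //.
    move: eqPQ hsQ h5; set a := size P; set b := size Q; set c := size s%:P; lia.
  move: h1; rewrite E eR size_polyDl; last by rewrite h2.
  rewrite h2; lia.
-
  have key : P * (Q^`() - s%:P * P) = Q * (P^`() - s%:P * 'X * P - Q).
    apply/eqP; rewrite -subr_eq0.
    have -> : P * (Q^`() - s%:P * P) - Q * (P^`() - s%:P * 'X * P - Q)
        = - (Dq Q P - (s%:P * P * ('X * Q - P) + Q ^+ 2)) by rewrite /Dq; ring.
    by rewrite E subrr oppr0.
  have dv : Q %| P * (Q^`() - s%:P * P) by rewrite key dvdp_mulIl.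
  rewrite Gauss_dvdpr // in dv.
  have z : Q^`() - s%:P * P = 0.
    apply/eqP; apply/negPn/negP => nz.
    have := dvdp_leq nz dv.
    apply/negP; rewrite -ltnNge.
    apply: leq_ltn_trans (size_polyD _ _) _; rewrite size_polyN gtn_max.
    rewrite (lt_size_deriv hQ) /=.
    apply: leq_ltn_trans (size_polyMleq _ _) _.
    move: ltPQ hsP (size_polyC_leq1 s); set a := size P; set b := size Q; set c := size s%:P; lia.
  have Pdef : P = s%:P * Q^`().
    move/eqP: z; rewrite subr_eq0 => /eqP ->.
    by rewrite mulrA -polyCM hs mul1r.
  rewrite Pdef /Dq derivM derivC mul0r add0r in E.
  have E2 : (s%:P * Q^`()^`() - ('X * Q^`() + Q)) * Q = 0.
    have -> : (s%:P * Q^`()^`() - ('X * Q^`() + Q)) * Q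
      = (s%:P * Q^`()^`() * Q - s%:P * Q^`() * Q^`()
         - (s%:P * (s%:P * Q^`()) * ('X * Q - s%:P * Q^`()) + Q ^+ 2))
        + (s%:P * s%:P - 1) * ('X * Q^`() * Q - s%:P * Q^`() * Q^`()) by ring.
    by rewrite E subrr -polyCM hs subrr mul0r addr0.
  move/eqP: E2; rewrite mulf_eq0 (negPf hQ) orbF subr_eq0 => /eqP E2.
  set n := (size Q).-1.
  have := congr1 (fun p : {poly F} => p`_n) E2; rewrite /= coefCM !coef_deriv.
  rewrite (@nth_default _ _ _ n.+2); last first. rewrite /n. move: hsQ. set b := size Q. lia.
  rewrite mul0rn mul0rn mulr0 coefD coefXM.
  have lc : Q`_n != 0 by rewrite -lead_coefE lead_coef_eq0.
  have -> : (if n == 0%N then 0 else Q^`()`_n.-1) + Q`_n = Q`_n *+ n.+1.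
    case: n lc => [|m] lc /=; first by rewrite add0r.
    by rewrite coef_deriv -mulrSr.
  move/esym/eqP; rewrite mulrn_eq0 /= (negPf lc) //.
Qed.


Lemma lemR Q P (s : F) : s * s = 1 -> Q != 0 ->
  (size P <= size Q)%N -> Dq Q P = s%:P * P * ('X * Q - P) + Q ^+ 2 -> False.
Proof.
move=> hs hQ hPQ E.
have cop := coprimep_div_gcd (p := Q) (q := P) (introT orP (or_introl hQ)).
set g := gcdp Q P in cop.
have hg : g != 0 by rewrite /g gcdp_eq0 negb_and hQ.
have hQe : Q = (Q %/ g) * g by rewrite divpK // dvdp_gcdl.
have hPe : P = (P %/ g) * g by rewrite divpK // dvdp_gcdr.
have [Q1 [P1 [{}hQe {}hPe {}cop]]] : exists Q1 P1 : {poly F},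
    [/\ Q = Q1 * g, P = P1 * g & coprimep Q1 P1] by exists (Q %/ g), (P %/ g).
have hQ1 : Q1 != 0 by apply/eqP => Q10; move: hQ; rewrite hQe Q10 mul0r eqxx.
apply: (@lemRcop Q1 P1 s hs hQ1 cop).
- have [->|hP1] := eqVneq P1 0; first by rewrite size_poly0.
  move: hPQ; rewrite {1}hPe {1}hQe !size_mul //.
  have := size_poly_gt0 g; rewrite hg => /= hsg.
  move: hsg; set a := size P1; set b := size Q1; set c := size g; lia.
- apply: (mulfI (expf_neq0 2 hg)).
  have e1 : Dq Q P = g ^+ 2 * Dq Q1 P1.
    by rewrite {1}hQe {1}hPe /Dq !derivM; ring.
  rewrite -e1 E hPe hQe; ring.
Qed.


Lemma killL Q U G : Q != 0 -> (size Q < size G)%N -> Dq Q U = U * G -> U = 0.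
Proof. by move=> hQ hG E; apply: (@lemL Q U G hQ hG); rewrite E mulrC. Qed.

Lemma ord5_cases (i : 'I_5) : i = 0 \/ i = 1 \/ i = 2 \/ i = 3 \/ i = 4.
Proof.
case: i => [[|[|[|[|[|n]]]]] H]; [left|right;left|right;right;left|right;right;right;left|right;right;right;right|done]; exact: val_inj.
Qed.

Lemma s5_0_1 : ((0 : 'I_5) + (1 : 'I_5) = (1 : 'I_5)). Proof. by apply: val_inj. Qed.
Lemma s5_0_2 : ((0 : 'I_5) + (2 : 'I_5) = (2 : 'I_5)). Proof. by apply: val_inj. Qed.
Lemma s5_0_3 : ((0 : 'I_5) + (3 : 'I_5) = (3 : 'I_5)). Proof. by apply: val_inj. Qed.
Lemma s5_0_4 : ((0 : 'I_5) + (4 : 'I_5) = (4 : 'I_5)). Proof. by apply: val_inj. Qed.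
Lemma s5_1_1 : ((1 : 'I_5) + (1 : 'I_5) = (2 : 'I_5)). Proof. by apply: val_inj. Qed.
Lemma s5_1_2 : ((1 : 'I_5) + (2 : 'I_5) = (3 : 'I_5)). Proof. by apply: val_inj. Qed.
Lemma s5_1_3 : ((1 : 'I_5) + (3 : 'I_5) = (4 : 'I_5)). Proof. by apply: val_inj. Qed.
Lemma s5_1_4 : ((1 : 'I_5) + (4 : 'I_5) = (0 : 'I_5)). Proof. by apply: val_inj. Qed.
Lemma s5_2_1 : ((2 : 'I_5) + (1 : 'I_5) = (3 : 'I_5)). Proof. by apply: val_inj. Qed.
Lemma s5_2_2 : ((2 : 'I_5) + (2 : 'I_5) = (4 : 'I_5)). Proof. by apply: val_inj. Qed.
Lemma s5_2_3 : ((2 : 'I_5) + (3 : 'I_5) = (0 : 'I_5)). Proof. by apply: val_inj. Qed.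
Lemma s5_2_4 : ((2 : 'I_5) + (4 : 'I_5) = (1 : 'I_5)). Proof. by apply: val_inj. Qed.
Lemma s5_3_1 : ((3 : 'I_5) + (1 : 'I_5) = (4 : 'I_5)). Proof. by apply: val_inj. Qed.
Lemma s5_3_2 : ((3 : 'I_5) + (2 : 'I_5) = (0 : 'I_5)). Proof. by apply: val_inj. Qed.
Lemma s5_3_3 : ((3 : 'I_5) + (3 : 'I_5) = (1 : 'I_5)). Proof. by apply: val_inj. Qed.
Lemma s5_3_4 : ((3 : 'I_5) + (4 : 'I_5) = (2 : 'I_5)). Proof. by apply: val_inj. Qed.
Lemma s5_4_1 : ((4 : 'I_5) + (1 : 'I_5) = (0 : 'I_5)). Proof. by apply: val_inj. Qed.
Lemma s5_4_2 : ((4 : 'I_5) + (2 : 'I_5) = (1 : 'I_5)). Proof. by apply: val_inj. Qed.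
Lemma s5_4_3 : ((4 : 'I_5) + (3 : 'I_5) = (2 : 'I_5)). Proof. by apply: val_inj. Qed.
Lemma s5_4_4 : ((4 : 'I_5) + (4 : 'I_5) = (3 : 'I_5)). Proof. by apply: val_inj. Qed.
Ltac i5 := rewrite ?s5_0_1 ?s5_0_2 ?s5_0_3 ?s5_0_4 ?s5_1_1 ?s5_1_2 ?s5_1_3 ?s5_1_4 ?s5_2_1 ?s5_2_2 ?s5_2_3 ?s5_2_4 ?s5_3_1 ?s5_3_2 ?s5_3_3 ?s5_3_4 ?s5_4_1 ?s5_4_2 ?s5_4_3 ?s5_4_4.

Lemma mN1N1 : (-1 : F) * (-1) = 1.
Proof. by rewrite mulrNN mulr1. Qed.

Lemma lemG0 Q P G : Q != 0 -> (size Q < size P)%N -> Dq Q P = P * G ->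
  (size G <= size Q)%N.
Proof. by move=> hQ hP E; apply: (@lemG Q P G 0 hQ hP); rewrite E polyC0 mul0r addr0. Qed.
Lemma lemG1 Q P G : Q != 0 -> (size Q < size P)%N -> Dq Q P = P * G + Q ^+ 2 ->
  (size G <= size Q)%N.
Proof. by move=> hQ hP E; apply: (@lemG Q P G 1 hQ hP); rewrite E polyC1 mul1r. Qed.

Ltac regs := repeat first [assumption | apply: regD | apply: regN | apply: reg0].
Ltac pole_by A B := apply: (@pole_split _ _ A B);
  [ring | rewrite ?size_polyN; assumption | regs].

Theorem poly_main (Q : {poly F}) (P : 'I_5 -> {poly F}) : Q != 0 ->
  (forall j, Dq Q (P j) = P j * (P (j+1) - P (j+2) + P (j+3) - P (j+4))
                 + (alpha10000 F j)%:P * Q ^+ 2) ->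
  P 0 + P 1 + P 2 + P 3 + P 4 = 'X * Q ->
  (exists i : 'I_5,
    ((size Q < size (P i))%N /\ forall j, j != i -> (size (P j) <= size Q)%N)
    \/ [/\ (size Q < size (P i))%N, (size Q < size (P (i+1)%R))%N,
           (size Q < size (P (i+3)%R))%N, (size (P (i+2)%R) <= size Q)%N
         & (size (P (i+4)%R) <= size Q)%N]) ->
  P 0 = 'X * Q /\ forall j, j != 0 -> P j = 0.
Proof.
move=> hQ E S [i Hi].
have E0 : Dq Q (P 0) = P 0 * (P 1 - P 2 + P 3 - P 4) + Q ^+ 2.
  by move: (E 0); rewrite /alpha10000 /=; i5; rewrite polyC1 mul1r .
have E1 : Dq Q (P 1) = P 1 * (P 2 - P 3 + P 4 - P 0).
  by move: (E 1); rewrite /alpha10000 /=; i5; rewrite polyC0 mul0r addr0 .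
have E2 : Dq Q (P 2) = P 2 * (P 3 - P 4 + P 0 - P 1).
  by move: (E 2); rewrite /alpha10000 /=; i5; rewrite polyC0 mul0r addr0 .
have E3 : Dq Q (P 3) = P 3 * (P 4 - P 0 + P 1 - P 2).
  by move: (E 3); rewrite /alpha10000 /=; i5; rewrite polyC0 mul0r addr0 .
have E4 : Dq Q (P 4) = P 4 * (P 0 - P 1 + P 2 - P 3).
  by move: (E 4); rewrite /alpha10000 /=; i5; rewrite polyC0 mul0r addr0 .
clear E.
have XQe : 'X * Q = P 0 + P 1 + P 2 + P 3 + P 4 by rewrite S.
have onlyF : False -> P 0 = 'X * Q /\ forall j, j != 0 -> P j = 0 by [].
move: Hi; case: (ord5_cases i) => [->|[->|[->|[->|->]]]]; i5.
- case=> [[hp hr]|[p0 p1 p3 r2 r4]].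
  + have r1 := hr 1 isT; have r2 := hr 2 isT; have r3 := hr 3 isT; have r4 := hr 4 isT.
    have z1 : P 1 = 0.
      apply: (@killL Q (P 1) _ hQ _ E1). pole_by (- P 0) (P 2 - P 3 + P 4).
    have z2 : P 2 = 0.
      apply: (@killL Q (P 2) _ hQ _ E2). pole_by (P 0) (P 3 - P 4 - P 1).
    have z3 : P 3 = 0.
      apply: (@killL Q (P 3) _ hQ _ E3). pole_by (- P 0) (P 4 + P 1 - P 2).
    have z4 : P 4 = 0.
      apply: (@killL Q (P 4) _ hQ _ E4). pole_by (P 0) (- P 1 + P 2 - P 3).
    split; first by rewrite XQe z1 z2 z3 z4 !addr0.
    move=> j; case: (ord5_cases j) => [->|[->|[->|[->|->]]]] // _.
  + apply: onlyF.
    have g3 := @lemG0 Q _ _ hQ p3 E3.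
    have z2 : P 2 = 0.
      apply: (@killL Q (P 2) _ hQ _ E2). pole_by (P 3) (- P 2 - (P 4 - P 0 + P 1 - P 2)).
    have z4 : P 4 = 0.
      apply: (@killL Q (P 4) _ hQ _ E4). pole_by (- P 3) (P 4 - (P 4 - P 0 + P 1 - P 2)).
    have g1 := @lemG0 Q _ _ hQ p1 E1.
    apply: (@lemR Q ('X * Q - P 1) 1 (mulr1 _) hQ).
      have -> : 'X * Q - P 1 = - (P 2 - P 3 + P 4 - P 0) by rewrite XQe z2 z4; ring.
      regs.
    rewrite DqB DqXQ E1 XQe z2 z4 polyC1; ring.
- case=> [[hp hr]|[p1 p2 p4 r3 r0]]; apply: onlyF.
  + have r0 := hr 0 isT; have r2 := hr 2 isT; have r3 := hr 3 isT; have r4 := hr 4 isT.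
    have z2 : P 2 = 0.
      apply: (@killL Q (P 2) _ hQ _ E2). pole_by (- P 1) (P 3 - P 4 + P 0).
    have z3 : P 3 = 0.
      apply: (@killL Q (P 3) _ hQ _ E3). pole_by (P 1) (P 4 - P 0 - P 2).
    have z4 : P 4 = 0.
      apply: (@killL Q (P 4) _ hQ _ E4). pole_by (- P 1) (P 0 + P 2 - P 3).
    apply: (@lemR Q (P 0) 1 (mulr1 _) hQ r0).
    rewrite E0 XQe z2 z3 z4 polyC1; ring.
  + have g4 := @lemG0 Q _ _ hQ p4 E4.
    have z3 : P 3 = 0.
      apply: (@killL Q (P 3) _ hQ _ E3). pole_by (P 4) (- P 3 - (P 0 - P 1 + P 2 - P 3)).
    have zU : P 2 + P 4 = 0.
      apply: (@lemL Q (P 2 + P 4) (P 0 - P 1) hQ).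
        pole_by (- P 1) (P 0).
      rewrite DqD E2 E4 z3; ring.
    have e4 : P 4 = - P 2 by apply/eqP; rewrite -addr_eq0 addrC zU.
    apply: (@lemR Q (P 0) 1 (mulr1 _) hQ r0).
    rewrite E0 XQe z3 e4 polyC1; ring.
- case=> [[hp hr]|[p2 p3 p0 r4 r1]]; apply: onlyF.
  + have r0 := hr 0 isT; have r1 := hr 1 isT; have r3 := hr 3 isT; have r4 := hr 4 isT.
    have z1 : P 1 = 0.
      apply: (@killL Q (P 1) _ hQ _ E1). pole_by (P 2) (- P 3 + P 4 - P 0).
    have z3 : P 3 = 0.
      apply: (@killL Q (P 3) _ hQ _ E3). pole_by (- P 2) (P 4 - P 0 + P 1).
    have z4 : P 4 = 0.
      apply: (@killL Q (P 4) _ hQ _ E4). pole_by (P 2) (P 0 - P 1 - P 3).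
    apply: (@lemR Q (P 0) (-1) mN1N1 hQ r0).
    rewrite E0 XQe z1 z3 z4 polyCN polyC1; ring.
  + have g0 := @lemG1 Q _ _ hQ p0 E0.
    have z4 : P 4 = 0.
      apply: (@killL Q (P 4) _ hQ _ E4). pole_by (P 0) (- P 4 - (P 1 - P 2 + P 3 - P 4)).
    have z1 : P 1 = 0.
      apply: (@killL Q (P 1) _ hQ _ E1). pole_by (- P 0) (P 1 - (P 1 - P 2 + P 3 - P 4)).
    have g2 := @lemG0 Q _ _ hQ p2 E2.
    apply: (@lemR Q ('X * Q - P 2) (-1) mN1N1 hQ).
      have -> : 'X * Q - P 2 = P 3 - P 4 + P 0 - P 1 by rewrite XQe z4 z1; ring.
      regs.
    rewrite DqB DqXQ E2 XQe z4 z1 polyCN polyC1; ring.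
- case=> [[hp hr]|[p3 p4 p1 r0 r2]]; apply: onlyF.
  + have r0 := hr 0 isT; have r1 := hr 1 isT; have r2 := hr 2 isT; have r4 := hr 4 isT.
    have z1 : P 1 = 0.
      apply: (@killL Q (P 1) _ hQ _ E1). pole_by (- P 3) (P 2 + P 4 - P 0).
    have z2 : P 2 = 0.
      apply: (@killL Q (P 2) _ hQ _ E2). pole_by (P 3) (- P 4 + P 0 - P 1).
    have z4 : P 4 = 0.
      apply: (@killL Q (P 4) _ hQ _ E4). pole_by (- P 3) (P 0 - P 1 + P 2).
    apply: (@lemR Q (P 0) 1 (mulr1 _) hQ r0).
    rewrite E0 XQe z1 z2 z4 polyC1; ring.
  + have g1 := @lemG0 Q _ _ hQ p1 E1.
    have z2 : P 2 = 0.
      apply: (@killL Q (P 2) _ hQ _ E2). pole_by (- P 1) (P 2 - (P 2 - P 3 + P 4 - P 0)).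
    have zU : P 1 + P 3 = 0.
      apply: (@lemL Q (P 1 + P 3) (P 4 - P 0) hQ).
        pole_by (P 4) (- P 0).
      rewrite DqD E1 E3 z2; ring.
    have e3 : P 3 = - P 1 by apply/eqP; rewrite -addr_eq0 addrC zU.
    apply: (@lemR Q (P 0) (-1) mN1N1 hQ r0).
    rewrite E0 XQe z2 e3 polyCN polyC1; ring.
- case=> [[hp hr]|[p4 p0 p2 r1 r3]]; apply: onlyF.
  + have r0 := hr 0 isT; have r1 := hr 1 isT; have r2 := hr 2 isT; have r3 := hr 3 isT.
    have z1 : P 1 = 0.
      apply: (@killL Q (P 1) _ hQ _ E1). pole_by (P 4) (P 2 - P 3 - P 0).
    have z2 : P 2 = 0.
      apply: (@killL Q (P 2) _ hQ _ E2). pole_by (- P 4) (P 3 + P 0 - P 1).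
    have z3 : P 3 = 0.
      apply: (@killL Q (P 3) _ hQ _ E3). pole_by (P 4) (- P 0 + P 1 - P 2).
    apply: (@lemR Q (P 0) (-1) mN1N1 hQ r0).
    rewrite E0 XQe z1 z2 z3 polyCN polyC1; ring.
  + have g2 := @lemG0 Q _ _ hQ p2 E2.
    have z1 : P 1 = 0.
      apply: (@killL Q (P 1) _ hQ _ E1). pole_by (P 2) (- P 1 - (P 3 - P 4 + P 0 - P 1)).
    have z3 : P 3 = 0.
      apply: (@killL Q (P 3) _ hQ _ E3). pole_by (- P 2) (P 3 - (P 3 - P 4 + P 0 - P 1)).
    have g4 := @lemG0 Q _ _ hQ p4 E4.
    apply: (@lemR Q ('X * Q - P 4) (-1) mN1N1 hQ).
      have -> : 'X * Q - P 4 = P 0 - P 1 + P 2 - P 3 by rewrite XQe z1 z3; ring.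
      regs.
    rewrite DqB DqXQ E4 XQe z1 z3 polyCN polyC1; ring.
Qed.

End PolyPart.

Local Open Scope quotient_scope.

Arguments Dq {F}.

Section Trans.
Variable F : numClosedFieldType.

Lemma rden_neq0 (r : ratfun F) : rden r != 0.
Proof. exact: denom_ratioP. Qed.

Lemma ratfun_rep (r : ratfun F) : r = (rnum r)%:F / (rden r)%:F.
Proof.
rewrite /rnum /rden.
set x := repr r.
have -> : r = \pi_({fraction {poly F}}) x by rewrite /x reprK.
have dx := denom_ratioP x.
have dF : (\d_x)%:F != 0 by rewrite tofrac_eq0.
apply: (mulIf dF); rewrite divfK //.
rewrite [_%:F]piE [X in _ = X]piE.
rewrite -[X in X = _](FracField.pi_mul); apply/eqmodP; rewrite /= FracField.equivfE /=.
rewrite /FracField.mulf !numden_Ratio ?oner_neq0 ?mulf_neq0 ?oner_neq0 //.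
by rewrite !mulr1 mulrC.
Qed.

Lemma frac_eq (p1 q1 p2 q2 : {poly F}) : q1 != 0 -> q2 != 0 ->
  p1%:F / q1%:F = p2%:F / q2%:F -> p1 * q2 = p2 * q1.
Proof.
move=> h1 h2 /eqP; rewrite eqr_div ?tofrac_eq0 // -!tofracM tofrac_eq.
by move/eqP.
Qed.

Lemma frac_eqR (p1 q1 p2 q2 : {poly F}) : q1 != 0 -> q2 != 0 ->
  p1 * q2 = p2 * q1 -> p1%:F / q1%:F = p2%:F / q2%:F.
Proof.
move=> h1 h2 e; apply/eqP; rewrite eqr_div ?tofrac_eq0 // -!tofracM e.
by [].
Qed.

Lemma rderiv_rep (r : ratfun F) (p q : {poly F}) : q != 0 ->
  r = p%:F / q%:F -> rderiv r = (Dq q p)%:F / (q ^+ 2)%:F.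
Proof.
move=> hq hr; rewrite /rderiv.
have hd := rden_neq0 r.
have e : rnum r * q = p * rden r.
  by apply: frac_eq => //; rewrite -ratfun_rep.
set n := rnum r in e *; set d := rden r in e hd *.
apply: frac_eqR; rewrite ?expf_neq0 //.
apply/eqP; rewrite -subr_eq0.
have -> : (n^`() * d - n * d^`()) * q ^+ 2 - Dq q p * d ^+ 2
   = d * q * ((n * q)^`() - (p * d)^`()) - (q^`() * d + d^`() * q) * (n * q - p * d).
  by rewrite /Dq !derivM; ring.
by rewrite e !subrr mulr0 mulr0 subr0.
Qed.

Lemma reg_rep (r : ratfun F) (p q : {poly F}) : q != 0 ->
  r = p%:F / q%:F -> regular_at_infty r = (size p <= size q)%N.
Proof.
move=> hq hr; rewrite /regular_at_infty.
have hd := rden_neq0 r.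
have e : rnum r * q = p * rden r.
  by apply: frac_eq => //; rewrite -ratfun_rep.
set n := rnum r in e *; set d := rden r in e hd *.
have [p0|hp] := eqVneq p 0.
  move: e; rewrite p0 mul0r => /eqP; rewrite mulf_eq0 (negPf hq) orbF => /eqP ->.
  by rewrite size_poly0.
have hn : n != 0.
  apply/eqP => n0; move: e; rewrite n0 mul0r => /eqP; rewrite eq_sym mulf_eq0.
  by rewrite (negPf hp) (negPf hd).
have := congr1 (fun x : {poly F} => size x) e; rewrite /= !size_mul //.
have := size_poly_gt0 n; have := size_poly_gt0 q; have := size_poly_gt0 p; have := size_poly_gt0 d.
rewrite hn hq hp hd.
set a := size n; set b := size q; set c := size p; set e' := size d.
move=> *; apply/idP/idP => ?; lia.
Qed.

Lemma sum5 (V : zmodType) (g : 'I_5 -> V) :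
  \sum_(j < 5) g j = g 0 + g 1 + g 2 + g 3 + g 4.
Proof.
rewrite !big_ord_recr big_ord0 /= (@add0r V).
by congr (_ + _ + _ + _ + _); congr (g _); apply: val_inj.
Qed.

End Trans.

Lemma gaux5 (K : fieldType) (p p1 p2 p3 p4 c q : K) : q != 0 ->
  p / q * (p1 / q - p2 / q + p3 / q - p4 / q) + c
  = (p * (p1 - p2 + p3 - p4) + c * q ^+ 2) / q ^+ 2.
Proof. by move=> hq; field. Qed.

Lemma gaux6 (K : fieldType) (p0 p1 p2 p3 p4 q : K) : q != 0 ->
  p0 / q + p1 / q + p2 / q + p3 / q + p4 / q = (p0 + p1 + p2 + p3 + p4) / q.
Proof. by move=> hq; field. Qed.

Lemma aux5 (K : numClosedFieldType) (p p1 p2 p3 p4 c q : {poly K}) : q != 0 ->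
  p%:F / q%:F * (p1%:F / q%:F - p2%:F / q%:F + p3%:F / q%:F - p4%:F / q%:F) + c%:F
  = (p * (p1 - p2 + p3 - p4) + c * q ^+ 2)%:F / (q ^+ 2)%:F.
Proof.
move=> hq; rewrite gaux5 ?tofrac_eq0 //.
rewrite tofracD !tofracM !tofracB tofracD tofracB; by rewrite !expr2.
Qed.

Lemma aux6 (K : numClosedFieldType) (p0 p1 p2 p3 p4 q : {poly K}) : q != 0 ->
  p0%:F / q%:F + p1%:F / q%:F + p2%:F / q%:F + p3%:F / q%:F + p4%:F / q%:F
  = (p0 + p1 + p2 + p3 + p4)%:F / q%:F.
Proof. by move=> hq; rewrite gaux6 ?tofrac_eq0 // !rmorphD. Qed.

Ltac i5 := rewrite ?s5_0_1 ?s5_0_2 ?s5_0_3 ?s5_0_4 ?s5_1_1 ?s5_1_2 ?s5_1_3 ?s5_1_4 ?s5_2_1 ?s5_2_2 ?s5_2_3 ?s5_2_4 ?s5_3_1 ?s5_3_2 ?s5_3_3 ?s5_3_4 ?s5_4_1 ?s5_4_2 ?s5_4_3 ?s5_4_4.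

Local Close Scope quotient_scope.

Theorem lemma3p4 (F : numClosedFieldType) (f : 'I_5 -> ratfun F) :
  (A4_solution (@alpha10000 F) f /\ typeA f) <->
  (f 0 = tvar F /\ forall j : 'I_5, j != 0 -> f j = 0).
Proof.
split.
- move=> [[Hd Hs] HA].
  pose Q : {poly F} := \prod_(j < 5) rden (f j).
  pose P : 'I_5 -> {poly F} := fun j => rnum (f j) * \prod_(k < 5 | k != j) rden (f k).
  have hQ : Q != 0 by apply/prodf_neq0 => j _; exact: rden_neq0.
  have hf : forall j, f j = (P j)%:F / Q%:F.
    move=> j; rewrite {1}(@ratfun_rep F (f j)); apply: frac_eqR; rewrite ?rden_neq0 //.
    rewrite /P /Q (bigD1 j) //=; ring.
  clearbody Q P.
  have hQF : Q%:F != 0 by rewrite tofrac_eq0.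
  have E : forall j, Dq Q (P j) = P j * (P (j+1) - P (j+2) + P (j+3) - P (j+4))
                 + (alpha10000 F j)%:P * Q ^+ 2.
    move=> j; have := Hd j.
    rewrite (@rderiv_rep F (f j) (P j) Q hQ (hf j)) !hf => h.
    rewrite (@aux5 _ _ _ _ _ _ _ _ hQ) in h.
    have := @frac_eq F _ _ _ _ (expf_neq0 2 hQ) (expf_neq0 2 hQ) h.
    by move/(mulIf (expf_neq0 2 hQ)).

  have S : P 0 + P 1 + P 2 + P 3 + P 4 = 'X * Q.
    move: Hs; rewrite sum5 !hf /tvar => h.
    rewrite (@aux6 _ _ _ _ _ _ _ hQ) -[(_ : {poly F})%:F in RHS]divr1 -tofrac1 in h.
    have := @frac_eq F _ _ _ _ hQ (oner_neq0 _) h.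
    by rewrite mulr1 mulrC.

  have hreg : forall j, regular_at_infty (f j) = (size (P j) <= size Q)%N.
    by move=> j; exact: (@reg_rep F _ _ _ hQ (hf j)).
  have hpole : forall j, pole_at_infty (f j) = (size Q < size (P j))%N.
    by move=> j; rewrite /pole_at_infty hreg ltnNge.
  have HA' : exists i : 'I_5,
    ((size Q < size (P i))%N /\ forall j, j != i -> (size (P j) <= size Q)%N)
    \/ [/\ (size Q < size (P i))%N, (size Q < size (P (i+1)%R))%N,
           (size Q < size (P (i+3)%R))%N, (size (P (i+2)%R) <= size Q)%N
         & (size (P (i+4)%R) <= size Q)%N].
    case: HA => i [[h1 h2]|[h1 h2 h3 h4 h5]]; exists i.
      by left; split; [rewrite -hpole | move=> j hj; rewrite -hreg; apply: h2].
    by right; split; rewrite -?hpole -?hreg.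
  have [h0 hz] := @poly_main F Q P hQ E S HA'.
  split.
  + by rewrite hf h0 /tvar tofracM mulfK.
  + by move=> j hj; rewrite hf hz // tofrac0 mul0r.
- move=> [h0 hz].
  have hT : tvar F = ('X)%:F / (1 : {poly F})%:F by rewrite tofrac1 divr1.
  have h0' : (0 : ratfun F) = (0 : {poly F})%:F / (1 : {poly F})%:F.
    by rewrite tofrac0 mul0r.
  have dT : rderiv (tvar F) = 1.
    rewrite (@rderiv_rep F _ _ _ (oner_neq0 _) hT) /Dq derivX -polyC1 derivC.
    by rewrite mulr0 subr0 polyC1 mul1r expr1n divr1 tofrac1.
  have d0 : rderiv (0 : ratfun F) = 0.
    by rewrite (@rderiv_rep F _ _ _ (oner_neq0 _) h0') Dq0 tofrac0 mul0r.
  split; first split.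
  + move=> j; case: (ord5_cases j) => [->|[->|[->|[->|->]]]]; i5.
    * by rewrite h0 !hz // dT /alpha10000 /= polyC1 tofrac1; ring.
    * by rewrite hz // d0 /alpha10000 /= polyC0 tofrac0; ring.
    * by rewrite hz // d0 /alpha10000 /= polyC0 tofrac0; ring.
    * by rewrite hz // d0 /alpha10000 /= polyC0 tofrac0; ring.
    * by rewrite hz // d0 /alpha10000 /= polyC0 tofrac0; ring.
  + by rewrite sum5 h0 !hz // !addr0.
  + exists 0; left; split.
    * by rewrite /pole_at_infty h0 (@reg_rep F _ _ _ (oner_neq0 _) hT) size_polyX size_poly1.
    * by move=> j hj; rewrite hz // (@reg_rep F _ _ _ (oner_neq0 _) h0') size_poly0.
Qed.
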